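(* Let $p'$ be a joint distribution of two binary random variables $(D,E)$ with $p'(E=1)>0$ and $p'(E=0)>0$, and let $M',m'$ be real numbers in the feasible region for $p'$, i.e. $\max_{e\in\{0,1\}} p'(D=1\mid E=e)\le M'\le 1$ and $0\le m'\le \min_{e\in\{0,1\}} p'(D=1\mid E=e)$. Then for every $\delta>0$ there exists a joint distribution $p(D,E,U)$, with $D,E$ binary and $U$ categorical (finitely many values), satisfying positivity (i.e. $p(U=u)>0$ implies $p(E=e\mid U=u)>0$ for both $e\in\{0,1\}$), such that, writing $M=\max_{e,u} p(D=1\mid E=e,U=u)$ and $m=\min_{e,u}p(D=1\mid E=e,U=u)$ (over $e\in\{0,1\}$ and $u$ with $p(U=u)>0$): (i) $|M-M'|<\delta$, $|m-m'|<\delta$, and $|p(D=d,E=e)-p'(D=d,E=e)|<\delta$ for all $d,e\in\{0,1\}$; and (ii) simultaneously, $$\bigl|\,p(D_1=1)-\bigl[p(D=1,E=1)+p(E=0)\,M\bigr]\bigr|<\delta \quad\text{and}\quad \bigl|\,p(D_0=1)-\bigl[p(D=1,E=0)+p(E=1)\,m\bigr]\bigr|<\delta,$$ where $p(D_e=1)=\sum_u p(D=1\mid E=e,U=u)\,p(U=u)$ is the counterfactual probability of the outcome under exposure level $e$.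
   Context: Setting: $E$ (exposure) and $D$ (outcome) are binary, $U$ is an unmeasured categorical confounder, and the causal structure is the graph $U\to E$, $U\to D$, $E\to D$, interpreted as a non-parametric structural equation model with independent errors. $D_e$ denotes the counterfactual outcome when the exposure is set to $E=e$; under this model (counterfactual consistency and $D_e\perp E\mid U$) one has $p(D_e=1)=\sum_u p(D=1\mid E=e,U=u)p(U=u)$. The sensitivity parameters are $M=\max_{e,u}p(D=1\mid E=e,U=u)$ and $m=\min_{e,u}p(D=1\mid E=e,U=u)$. For any such model one has the bounds $p(D=1,E=e)+p(E=1-e)\,m\le p(D_e=1)\le p(D=1,E=e)+p(E=1-e)\,M$; the theorem says the upper bound for $p(D_1=1)$ and the lower bound for $p(D_0=1)$ are simultaneously arbitrarily sharp. *)

(* Defs.v *)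
From HB Require Import structures.
From mathcomp Require Import all_boot all_order all_algebra.
From mathcomp Require Import reals.
Set Implicit Arguments. Unset Strict Implicit. Unset Printing Implicit Defensive.
Import Order.TTheory GRing.Theory Num.Theory.
Local Open Scope ring_scope.

Section Defs.
Variable R : realType.

(* p' (d, e) = p'(D = d, E = e) *)
Definition is_dist2 (p' : {ffun bool * bool -> R}) : Prop :=
  (forall x, 0 <= p' x) /\ \sum_x p' x = 1.

Definition margE2 (p' : {ffun bool * bool -> R}) (e : bool) : R :=
  \sum_(d : bool) p' (d, e).

Definition condD2 (p' : {ffun bool * bool -> R}) (e : bool) : R :=
  p' (true, e) / margE2 p' e.

(* p (d, e, u) = p(D = d, E = e, U = u) *)
Definition is_dist3 n (p : {ffun bool * bool * 'I_n -> R}) : Prop :=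
  (forall x, 0 <= p x) /\ \sum_x p x = 1.

Definition margU n (p : {ffun bool * bool * 'I_n -> R}) (u : 'I_n) : R :=
  \sum_(d : bool) \sum_(e : bool) p (d, e, u).

Definition margEU n (p : {ffun bool * bool * 'I_n -> R}) (e : bool) (u : 'I_n) : R :=
  \sum_(d : bool) p (d, e, u).

Definition margDE n (p : {ffun bool * bool * 'I_n -> R}) (d e : bool) : R :=
  \sum_(u : 'I_n) p (d, e, u).

Definition margE n (p : {ffun bool * bool * 'I_n -> R}) (e : bool) : R :=
  \sum_(d : bool) margDE p d e.

Definition condDEU n (p : {ffun bool * bool * 'I_n -> R}) (e : bool) (u : 'I_n) : R :=
  p (true, e, u) / margEU p e u.

(* positivity: p(U = u) > 0 implies p(E = e | U = u) > 0 for both e,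
   i.e. p(E = e, U = u) > 0 *)
Definition positivity n (p : {ffun bool * bool * 'I_n -> R}) : Prop :=
  forall u, 0 < margU p u -> forall e, 0 < margEU p e u.

(* M = max over e and u with p(U=u) > 0 of p(D=1 | E=e, U=u).
   The values lie in [0,1] and the index range is nonempty for a
   distribution, so the neutral element 0 does not affect the value. *)
Definition Mmax n (p : {ffun bool * bool * 'I_n -> R}) : R :=
  \big[Num.max/0]_(eu : bool * 'I_n | 0 < margU p eu.2) condDEU p eu.1 eu.2.

(* m = min over the same range; neutral element 1 (values lie in [0,1]). *)
Definition mmin n (p : {ffun bool * bool * 'I_n -> R}) : R :=
  \big[Num.min/1]_(eu : bool * 'I_n | 0 < margU p eu.2) condDEU p eu.1 eu.2.

Definition pDcf n (p : {ffun bool * bool * 'I_n -> R}) (e : bool) : R :=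
  \sum_(u : 'I_n) condDEU p e u * margU p u.

End Defs.

(* Main.v *)
Require Import Defs.
From HB Require Import structures.
From mathcomp Require Import all_boot all_order all_algebra.
From mathcomp Require Import reals.
From mathcomp Require Import ring lra.
Import Order.TTheory GRing.Theory Num.Theory.
Local Open Scope ring_scope.
Set Implicit Arguments. Unset Strict Implicit.

Section S.
Variable R : realType.

Definition bb (d : bool) (c : R) : R := if d then c else 1 - c.

Definition mk (w c : bool -> nat -> R) : {ffun bool * bool * 'I_2 -> R} :=
  [ffun x => w x.1.2 (nat_of_ord x.2) * bb x.1.1 (c x.1.2 (nat_of_ord x.2))].

Variables w c : bool -> nat -> R.

Lemma margEU_mk e (u : 'I_2) : margEU (mk w c) e u = w e u.
Proof. rewrite /margEU big_bool /= !ffunE /bb /=; ring. Qed.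

Lemma margU_mk (u : 'I_2) : margU (mk w c) u = w true u + w false u.
Proof.
rewrite /margU big_bool /= !big_bool /= !ffunE /bb /=; ring.
Qed.

Lemma condDEU_mk e (u : 'I_2) : w e u != 0 -> condDEU (mk w c) e u = c e u.
Proof. by move=> h; rewrite /condDEU margEU_mk ffunE /bb /= [w e u * _]mulrC mulfK. Qed.

Lemma margDE_mk d e : margDE (mk w c) d e = w e 0 * bb d (c e 0) + w e 1 * bb d (c e 1).
Proof. by rewrite /margDE !big_ord_recr big_ord0 /= !ffunE /= add0r. Qed.

Lemma margE_mk e : margE (mk w c) e = w e 0 + w e 1.
Proof. rewrite /margE big_bool /= !margDE_mk /bb; ring. Qed.

Lemma pDcf_mk e : (forall u : 'I_2, w e u != 0) ->
  pDcf (mk w c) e = c e 0 * (w true 0 + w false 0) + c e 1 * (w true 1 + w false 1).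
Proof.
move=> h; rewrite /pDcf !big_ord_recr big_ord0 /= add0r !condDEU_mk ?margU_mk //.
Qed.

Lemma sum_mk : \sum_x mk w c x = w true 0 + w false 0 + w true 1 + w false 1.
Proof.
have -> : \sum_x mk w c x = \sum_a \sum_b mk w c (a, b).
  by rewrite [RHS]pair_bigA; apply: eq_bigr => -[].
rewrite (_ : \sum_(a : bool * bool) _ = \sum_(d : bool) \sum_(e : bool) \sum_(u < 2) mk w c (d, e, u)); last first.
  by rewrite [RHS]pair_bigA; apply: eq_bigr => -[].
rewrite !big_bool /= !big_ord_recr !big_ord0 /= !ffunE /bb /=; ring.
Qed.

Lemma bigmax_ub (I : eqType) (r : seq I) (P : pred I) (F : I -> R) x :
  x \in r -> P x -> F x <= \big[Num.max/0]_(i <- r | P i) F i.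
Proof.
elim: r => // y r IH; rewrite in_cons big_cons => /orP [/eqP -> | xr] Px.
  by rewrite Px le_max lexx.
by case: (P y); rewrite ?le_max IH ?orbT.
Qed.

Lemma bigmin_lb (I : eqType) (r : seq I) (P : pred I) (F : I -> R) x :
  x \in r -> P x -> \big[Num.min/1]_(i <- r | P i) F i <= F x.
Proof.
elim: r => // y r IH; rewrite in_cons big_cons => /orP [/eqP -> | xr] Px.
  by rewrite Px ge_min lexx.
by case: (P y); rewrite ?ge_min IH ?orbT.
Qed.

Lemma bigmax_eq (I : finType) (P : pred I) (F : I -> R) M x :
  0 <= M -> (forall i, P i -> F i <= M) -> P x -> F x = M ->
  \big[Num.max/0]_(i | P i) F i = M.
Proof.
move=> M0 hF Px Fx; apply: le_anti; apply/andP; split.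
  apply: (big_ind (fun v => v <= M)) => //.
  by move=> a b ha hb; rewrite ge_max ha hb.
by rewrite -Fx; apply: bigmax_ub => //; rewrite mem_index_enum.
Qed.

Lemma bigmin_eq (I : finType) (P : pred I) (F : I -> R) m x :
  m <= 1 -> (forall i, P i -> m <= F i) -> P x -> F x = m ->
  \big[Num.min/1]_(i | P i) F i = m.
Proof.
move=> M0 hF Px Fx; apply: le_anti; apply/andP; split.
  by rewrite -Fx; apply: bigmin_lb => //; rewrite mem_index_enum.
apply: (big_ind (fun v => m <= v)) => //.
by move=> a b ha hb; rewrite le_min ha hb.
Qed.
End S.

Lemma abs_small (R : realType) (x eps delta q s t : R) : x = eps * q * (s - t) ->
  0 < eps -> eps < delta -> 0 <= q <= 1 -> 0 <= s <= 1 -> 0 <= t <= 1 -> `|x| < delta.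
Proof.
move=> -> he hd /andP[q0 q1] /andP[s0 s1] /andP[t0 t1].
rewrite !normrM (gtr0_norm (x:=eps)) // (ger0_norm (x:=q)) //.
have h1 : `|s - t| <= 1 by rewrite ler_norml; apply/andP; split; lra.
have h2 : q * `|s - t| <= 1.
  have := normr_ge0 (s - t); nra.
rewrite -mulrA; have := normr_ge0 (s - t); nra.
Qed.

Unset Implicit Arguments. Set Strict Implicit.

Theorem theorem2 (R : realType) (p' : {ffun bool * bool -> R}) (M' m' : R) :
  is_dist2 p' ->
  0 < margE2 p' true -> 0 < margE2 p' false ->
  (forall e : bool, condD2 p' e <= M') -> M' <= 1 ->
  0 <= m' -> (forall e : bool, m' <= condD2 p' e) ->
  forall delta : R, 0 < delta ->
  exists (n : nat) (p : {ffun bool * bool * 'I_n -> R}),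
    is_dist3 p /\ positivity p /\
    (`|Mmax p - M'| < delta /\ `|mmin p - m'| < delta /\
     (forall d e : bool, `|margDE p d e - p' (d, e)| < delta)) /\
    (`|pDcf p true - (margDE p true true + margE p false * Mmax p)| < delta /\
     `|pDcf p false - (margDE p true false + margE p true * mmin p)| < delta).
Proof.
move=> [p0 p1] hq1 hq0 hM M1 m0 hm delta hd.
set q1 := margE2 p' true; set q0 := margE2 p' false.
set a1 := condD2 p' true; set a0 := condD2 p' false.
have hM1 : a1 <= M' by apply: hM.
have hM0 : a0 <= M' by apply: hM.
have hm1 : m' <= a1 by apply: hm.
have hm0 : m' <= a0 by apply: hm.
have pt : forall e, p' (true, e) = condD2 p' e * margE2 p' e.
  move=> e; rewrite /condD2 divfK //; case: e; apply: lt0r_neq0; done.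
have pf : forall e, p' (false, e) = margE2 p' e - condD2 p' e * margE2 p' e.
  by move=> e; rewrite -pt /margE2 big_bool /=; ring.
have hq1' : 0 < q1 := hq1.
have hq0' : 0 < q0 := hq0.
have ptt : p' (true, true) = a1 * q1 := pt true.
have ptf : p' (true, false) = a0 * q0 := pt false.
have pft : p' (false, true) = q1 - a1 * q1 := pf true.
have pff : p' (false, false) = q0 - a0 * q0 := pf false.
clear pt pf hq1 hq0.
have hq : q0 + q1 = 1.
  rewrite -p1 (_ : \sum_(x : bool * bool) _ = \sum_(d : bool) \sum_(e : bool) p' (d, e)); last first.
    by rewrite [RHS]pair_bigA; apply: eq_bigr => -[].
  rewrite /q0 /q1 /margE2 !big_bool /=; ring.
set eps := Num.min delta 1 / 2.
have he0 : 0 < eps by rewrite /eps divr_gt0 // lt_min hd ltr01.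
have he1 : eps < delta.
  have : Num.min delta 1 <= delta by rewrite ge_min lexx.
  rewrite /eps; lra.
have he2 : eps < 1.
  have : Num.min delta 1 <= 1 by rewrite ge_min lexx orbT.
  rewrite /eps; lra.
pose w (e : bool) (u : nat) : R :=
  if u == 0%N then (if e then eps * q1 else (1 - eps) * q0)
  else (if e then (1 - eps) * q1 else eps * q0).
pose c (e : bool) (u : nat) : R :=
  if u == 0%N then (if e then M' else a0) else (if e then a1 else m').
have hw : forall e (u : 'I_2), 0 < w e u.
  by move=> e [[|[|k]] hk] //; case: e; rewrite /w /=; nra.
have hw' : forall e (u : 'I_2), w e u != 0 by move=> e u; apply: lt0r_neq0.
have hU : forall u : 'I_2, 0 < margU (mk w c) u.
  by move=> u; rewrite margU_mk addr_gt0.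
have hMM : Mmax (mk w c) = M'.
  apply: (@bigmax_eq _ _ _ _ _ (true, (ord0 : 'I_2))) => //.
  - lra.
  - move=> [e u] _ /=; rewrite condDEU_mk ?hw' //.
    by case: u => [[|[|k]] hk] //; case: e; rewrite /c /=; lra.
  - by rewrite /= condDEU_mk ?hw'.
have hmm : mmin (mk w c) = m'.
  apply: (@bigmin_eq _ _ _ _ _ (false, (ord_max : 'I_2))) => //.
  - lra.
  - move=> [e u] _ /=; rewrite condDEU_mk ?hw' //.
    by case: u => [[|[|k]] hk] //; case: e; rewrite /c /=; lra.
  - by rewrite /= condDEU_mk ?hw'.
exists 2%N, (mk w c).
split; [split|split; [|split; [split; [|split]|split]]].
- move=> [[d e] u]; rewrite ffunE /=; apply: mulr_ge0; first exact: ltW.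
  by case: u => [[|[|k]] hk] //; case: d; case: e; rewrite /bb /c /=; lra.
- rewrite sum_mk /w /=; nra.
- by move=> u _ e; rewrite margEU_mk.
- rewrite hMM subrr normr0 //.
- rewrite hmm subrr normr0 //.
- have hq0b : 0 <= q0 <= 1 by apply/andP; split; lra.
  have hq1b : 0 <= q1 <= 1 by apply/andP; split; lra.
  have hb : forall x, m' <= x -> x <= M' -> 0 <= x <= 1.
    by move=> x h1 h2; apply/andP; split; lra.
  have hb' : forall x, m' <= x -> x <= M' -> 0 <= 1 - x <= 1.
    by move=> x h1 h2; apply/andP; split; lra.
  move=> d e; rewrite margDE_mk; case: d; case: e; rewrite ?ptt ?ptf ?pft ?pff /w /c /bb /=.
  + apply: (@abs_small _ _ eps delta q1 M' a1) => //; [ring|apply: hb|apply: hb]; lra.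
  + apply: (@abs_small _ _ eps delta q0 m' a0) => //; [ring|apply: hb|apply: hb]; lra.
  + apply: (@abs_small _ _ eps delta q1 (1 - M') (1 - a1)) => //; [ring|apply: hb'|apply: hb']; lra.
  + apply: (@abs_small _ _ eps delta q0 (1 - m') (1 - a0)) => //; [ring|apply: hb'|apply: hb']; lra.
- rewrite pDcf_mk // hMM margDE_mk margE_mk /w /c /bb /=.
  apply: (@abs_small _ _ eps delta q0 a1 M') => //; [ring| | |]; apply/andP; split; lra.
- rewrite pDcf_mk // hmm margDE_mk margE_mk /w /c /bb /=.
  apply: (@abs_small _ _ eps delta q1 a0 m') => //; [ring| | |]; apply/andP; split; lra.
Qed.
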